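(* Let $n\ge1$ and $a_1,\dots,a_n,b_1,\dots,b_n>0$. Put $S_a=\sum_{j=1}^n a_j^2$, $S_b=\sum_{j=1}^n b_j^2$, $$A=\frac{1}{8}\sqrt{S_aS_b}\cdot \sum_{i=1}^n \left(\frac{a_i^2}{S_a}-\frac{b_i^2}{S_b}\right)^2,$$ $$m=\min_{1\le i\le n}\min\left\{\frac{a_i^2}{S_a},\frac{b_i^2}{S_b}\right\},\qquad M=\max_{1\le i\le n}\max\left\{\frac{a_i^2}{S_a},\frac{b_i^2}{S_b}\right\}.$$ Then $$\frac{A^2}{M^2}+\frac{2A}{M}\sum_{i=1}^n a_ib_i\leq S_aS_b-\left(\sum_{i=1}^n a_ib_i\right)^2\leq \frac{A^2}{m^2}+\frac{2A}{m}\sum_{i=1}^n a_i b_i .$$ *)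

(* Defs.v *)
(* the statement is purely algebraic (uses only sqrt), so we
   state it over an arbitrary real closed field R (rcfType). *)
From HB Require Import structures.
From mathcomp Require Import all_boot all_order all_algebra.
Set Implicit Arguments. Unset Strict Implicit. Unset Printing Implicit Defensive.
Import Order.TTheory GRing.Theory Num.Theory.
Local Open Scope ring_scope.

Section Defs.
Variable R : rcfType.
Variable N : nat. (* vectors indexed by 'I_N.+1, i.e. n = N+1 >= 1 entries *)
Implicit Types a b : 'I_N.+1 -> R.

Definition sumsq a : R := \sum_(j < N.+1) a j ^+ 2.
Definition dotp a b : R := \sum_(i < N.+1) a i * b i.

Definition Aconst a b : R :=
  (8%:R)^-1 * Num.sqrt (sumsq a * sumsq b) *
  \sum_(i < N.+1) (a i ^+ 2 / sumsq a - b i ^+ 2 / sumsq b) ^+ 2.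

(* min over i of min(a_i^2/S_a, b_i^2/S_b); the fold is seeded with the
   i = 0 term, so it is the genuine minimum over the nonempty index set. *)
Definition mconst a b : R :=
  \big[Num.min/Num.min (a ord0 ^+ 2 / sumsq a) (b ord0 ^+ 2 / sumsq b)]_(i < N.+1)
     Num.min (a i ^+ 2 / sumsq a) (b i ^+ 2 / sumsq b).

Definition Mconst a b : R :=
  \big[Num.max/Num.max (a ord0 ^+ 2 / sumsq a) (b ord0 ^+ 2 / sumsq b)]_(i < N.+1)
     Num.max (a i ^+ 2 / sumsq a) (b i ^+ 2 / sumsq b).
End Defs.

(* Main.v *)
Require Import Defs.
From HB Require Import structures.
From mathcomp Require Import all_boot all_order all_algebra.
Import Order.TTheory GRing.Theory Num.Theory.
Local Open Scope ring_scope.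

Lemma L1 (R : rcfType) (s A M P : R) : 0 < M -> 0 <= A -> 0 <= P ->
  A / M + P <= s -> A ^+ 2 / M ^+ 2 + 2%:R * A / M * P <= s ^+ 2 - P ^+ 2.
Proof.
move=> hM hA hP h.
rewrite -expr_div_n -(mulrA 2%:R A) lerBrDr.
have hK : 0 <= A / M by rewrite divr_ge0 // ltW.
set K := A / M in h hK *.
have : (K + P) ^+ 2 <= s ^+ 2.
  rewrite !expr2; apply: ler_pM => //; rewrite ?addr_ge0 //.
move=> H; apply: le_trans H; by rewrite sqrrD -mulrA mulr_natl.
Qed.

Lemma L2 (R : rcfType) (s A M P : R) : 0 < M -> 0 <= A -> 0 <= P -> 0 <= s ->
  s <= A / M + P -> s ^+ 2 - P ^+ 2 <= A ^+ 2 / M ^+ 2 + 2%:R * A / M * P.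
Proof.
move=> hM hA hP hs h.
rewrite -expr_div_n -(mulrA 2%:R A) lerBlDr.
have hK : 0 <= A / M by rewrite divr_ge0 // ltW.
set K := A / M in h hK *.
have : s ^+ 2 <= (K + P) ^+ 2.
  rewrite !expr2; apply: ler_pM => //.
move=> H; apply: le_trans H _; by rewrite sqrrD -mulrA mulr_natl.
Qed.

Lemma upb (R : rcfType) (x y M : R) : 0 <= x -> 0 <= y -> x ^+ 2 <= M -> y ^+ 2 <= M ->
  (x + y) ^+ 2 <= M *+ 4.
Proof.
move=> hx hy hxM hyM.
have key : forall u v : R, 0 <= u -> u <= v -> v ^+ 2 <= M -> (u + v) ^+ 2 <= M *+ 4.
  move=> u v hu huv hv.
  apply: (@le_trans _ _ ((v + v) ^+ 2)).
    rewrite !expr2; apply: ler_pM; rewrite ?addr_ge0 ?lerD2r //; exact: le_trans huv.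
  by rewrite -mulr2n exprMn_n ler_wMn2r.
have [h|h] := leP x y; first exact: key.
by rewrite addrC; apply: key => //; apply: ltW.
Qed.

Lemma lob (R : rcfType) (x y m : R) : 0 <= x -> 0 <= y -> m <= x ^+ 2 -> m <= y ^+ 2 ->
  m *+ 4 <= (x + y) ^+ 2.
Proof.
move=> hx hy hxM hyM.
have key : forall u v : R, 0 <= u -> u <= v -> m <= u ^+ 2 -> m *+ 4 <= (u + v) ^+ 2.
  move=> u v hu huv hv.
  apply: (@le_trans _ _ ((u + u) ^+ 2)).
    by rewrite -mulr2n exprMn_n ler_wMn2r.
  rewrite !expr2; apply: ler_pM; rewrite ?addr_ge0 ?lerD2l //.
have [h|h] := leP x y; first exact: key.
by rewrite addrC; apply: key => //; apply: ltW.
Qed.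

Lemma eight (R : rcfType) (s z : R) : 8%:R^-1 * s * (z *+ 8) = s * z.
Proof.
by rewrite -(mulr_natl z) (mulrC (8%:R^-1 : R)) -mulrA (mulrA (8%:R^-1 : R)) mulVf ?pnatr_eq0 // mul1r.
Qed.

Lemma sumsq_gt0 (R : rcfType) (N : nat) (a : 'I_N.+1 -> R) :
  (forall i, 0 < a i) -> 0 < sumsq a.
Proof.
move=> ha; rewrite /sumsq (bigD1 ord0) //=; apply: ltr_wpDr.
  by apply: sumr_ge0 => i _; apply: sqr_ge0.
by apply: exprn_gt0.
Qed.

Theorem mainTheorem4 (R : rcfType) (N : nat) (a b : 'I_N.+1 -> R)
  (ha : forall i, 0 < a i) (hb : forall i, 0 < b i) :
  let Sa := sumsq a in let Sb := sumsq b in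
  let A := Aconst a b in let m := mconst a b in let M := Mconst a b in
  let P := dotp a b in
  A ^+ 2 / M ^+ 2 + 2%:R * A / M * P <= Sa * Sb - P ^+ 2 /\
  Sa * Sb - P ^+ 2 <= A ^+ 2 / m ^+ 2 + 2%:R * A / m * P.
Proof.
move=> Sa Sb A m M P.
have hSa : 0 < Sa by apply: sumsq_gt0.
have hSb : 0 < Sb by apply: sumsq_gt0.
set ra := Num.sqrt Sa; set rb := Num.sqrt Sb.
have hra : 0 < ra by rewrite sqrtr_gt0.
have hrb : 0 < rb by rewrite sqrtr_gt0.
have hra2 : ra ^+ 2 = Sa by rewrite sqr_sqrtr // ltW.
have hrb2 : rb ^+ 2 = Sb by rewrite sqr_sqrtr // ltW.
have hs : Num.sqrt (Sa * Sb) = ra * rb by rewrite sqrtrM // ltW.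
set s := ra * rb.
have hs0 : 0 < s by rewrite mulr_gt0.
pose x i := a i / ra. pose y i := b i / rb.
have hx0 : forall i, 0 <= x i by move=> i; rewrite divr_ge0 // ltW.
have hy0 : forall i, 0 <= y i by move=> i; rewrite divr_ge0 // ltW.
have hu : forall i, a i ^+ 2 / sumsq a = x i ^+ 2 by move=> i; rewrite /x expr_div_n hra2.
have hv : forall i, b i ^+ 2 / sumsq b = y i ^+ 2 by move=> i; rewrite /y expr_div_n hrb2.
have hx1 : \sum_(i < N.+1) x i ^+ 2 = 1.
  under eq_bigr => i _ do rewrite -hu.
  by rewrite -mulr_suml divff // gt_eqF.
have hy1 : \sum_(i < N.+1) y i ^+ 2 = 1.
  under eq_bigr => i _ do rewrite -hv.
  by rewrite -mulr_suml divff // gt_eqF.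
set c := \sum_(i < N.+1) x i * y i.
have hP : P = s * c.
  rewrite /c; under eq_bigr => i _ do rewrite /x /y mulrACA -invfM.
  by rewrite -mulr_suml mulrC divfK // gt_eqF.
have hE : \sum_(i < N.+1) (x i - y i) ^+ 2 = (1 - c) *+ 2.
  under eq_bigr => i _ do rewrite sqrrB.
  rewrite big_split sumrB sumrMnl /= hx1 hy1 -/c mulrnBl mulr2n addrAC //.
pose Q := \sum_(i < N.+1) (x i - y i) ^+ 2 * (x i + y i) ^+ 2.
have hA : A = 8%:R^-1 * s * Q.
  rewrite /A /Aconst hs; congr (_ * _); apply: eq_bigr => i _.
  by rewrite hu hv subr_sqr exprMn.
have hA0 : 0 <= A.
  rewrite hA; apply: mulr_ge0; first by rewrite mulr_ge0 ?invr_ge0 ?ler0n // ltW.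
  by apply: sumr_ge0 => i _; rewrite mulr_ge0 ?sqr_ge0.
have hP0 : 0 <= P by apply: sumr_ge0 => i _; rewrite mulr_ge0 // ltW.
have hmF : forall i, m <= Num.min (x i ^+ 2) (y i ^+ 2).
  by move=> i; rewrite /m /mconst (bigD1 i) //= -hu -hv ge_min lexx.
have hMF : forall i, Num.max (x i ^+ 2) (y i ^+ 2) <= M.
  by move=> i; rewrite /M /Mconst (bigD1 i) //= -hu -hv le_max lexx.
have hmx : forall i, m <= x i ^+ 2.
  by move=> i; apply: le_trans (hmF i) _; rewrite ge_min lexx.
have hmy : forall i, m <= y i ^+ 2.
  by move=> i; apply: le_trans (hmF i) _; rewrite ge_min lexx orbT.
have hMx : forall i, x i ^+ 2 <= M.
  by move=> i; apply: le_trans _ (hMF i); rewrite le_max lexx.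
have hMy : forall i, y i ^+ 2 <= M.
  by move=> i; apply: le_trans _ (hMF i); rewrite le_max lexx orbT.
have hm0 : 0 < m.
  rewrite /m /mconst; apply: (big_ind (fun z => 0 < z)).
  - by rewrite lt_min !divr_gt0 ?exprn_gt0.
  - by move=> u w hu0 hw0; rewrite lt_min hu0 hw0.
  - by move=> i _; rewrite lt_min !divr_gt0 ?exprn_gt0.
have hM0 : 0 < M by apply: lt_le_trans hm0 (le_trans (hmx ord0) (hMx ord0)).
have hss : Sa * Sb = s ^+ 2 by rewrite /s -hs sqr_sqrtr // mulr_ge0 // ltW.
have hsP : s - P = s * (1 - c) by rewrite hP mulrBr mulr1.
have e8 : forall z : R, ((1 - c) * z) *+ 8 = ((1 - c) *+ 2) * (z *+ 4).
  by move=> z; rewrite mulrnAl mulrnAr -mulrnA.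
rewrite hss; split.
  apply: L1 => //; rewrite -lerBrDr ler_pdivrMr // hA hsP -(mulrA s) -(eight _ s ((1 - c) * M)).
  apply: ler_wpM2l; first by rewrite mulr_ge0 ?invr_ge0 ?ler0n // ltW.
  rewrite e8 -hE mulr_suml.
  apply: ler_sum => i _; apply: ler_wpM2l; first exact: sqr_ge0.
  by apply: upb.
apply: L2 => //; first exact: ltW.
rewrite -lerBlDr ler_pdivlMr // hA hsP -(mulrA s) -(eight _ s ((1 - c) * m)).
apply: ler_wpM2l; first by rewrite mulr_ge0 ?invr_ge0 ?ler0n // ltW.
rewrite e8 -hE mulr_suml.
apply: ler_sum => i _; apply: ler_wpM2l; first exact: sqr_ge0.
by apply: lob.
Qed.
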